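(* Let $G$ be a finite group, $A$ an abelian group and $f:G\to A$ an arbitrary function. Let $f^{g_1},\dots,f^{g_n}$ (with $g_1,\dots,g_n\in G$) be the distinct elements of the set $\{f^g: g\in G\}$. Then the function $\overline f:G\to A$ defined by $\overline f(x)=\prod_{i=1}^n f^{g_i}(x)$ is a group homomorphism.
   Context: For a function $f:G\to A$ and $a\in G$, $f^a:G\to A$ is defined by $f^a(x)=f(a)^{-1}f(ax)$. *)

(* Defs.v *)
(* The finite group G is the whole finGroupType gT; the
   abelian group A is a zmodType, written additively (so the product of the
   paper becomes a sum, and f(a)^{-1} f(ax) becomes f(a x) - f(a)). *)
From HB Require Import structures.
From mathcomp Require Import all_boot all_order all_algebra all_fingroup.
Set Implicit Arguments. Unset Strict Implicit. Unset Printing Implicit Defensive.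
Import GRing.Theory.

Local Open Scope group_scope.

(* f^a : x |-> f(a)^{-1} f(a x), as a finite function (so that equality of
   such functions is decidable and distinctness is meaningful). *)
Definition fshift (gT : finGroupType) (A : zmodType) (f : gT -> A) (a : gT)
  : {ffun gT -> A} := [ffun x => (f (a * x)%g - f a)%R].

Definition fshifts (gT : finGroupType) (A : zmodType) (f : gT -> A)
  : seq {ffun gT -> A} := undup [seq fshift f g | g <- enum gT].

Definition fbar (gT : finGroupType) (A : zmodType) (f : gT -> A) (x : gT) : A :=
  (\sum_(h <- fshifts f) h x)%R.

(* Main.v *)
Require Import Defs.
From HB Require Import structures.
From mathcomp Require Import all_boot all_order all_algebra all_fingroup.
Set Implicit Arguments. Unset Strict Implicit. Unset Printing Implicit Defensive.
Import GRing.Theory.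
Local Open Scope group_scope.

Definition shiftx (gT : finGroupType) (A : zmodType) (x : gT) (h : {ffun gT -> A})
  : {ffun gT -> A} := [ffun y => (h (x * y)%g - h x)%R].

Lemma shiftx_fshift (gT : finGroupType) (A : zmodType) (f : gT -> A) g x :
  shiftx x (fshift f g) = fshift f (g * x)%g.
Proof.
apply/ffunP=> y; rewrite !ffunE mulgA.
by rewrite opprB GRing.addrA GRing.subrK.
Qed.

Lemma mem_fshifts (gT : finGroupType) (A : zmodType) (f : gT -> A) h :
  (h \in fshifts f) = [exists g, h == fshift f g].
Proof.
rewrite /fshifts mem_undup; apply/mapP/existsP=> [[g _ ->]|[g /eqP ->]].
  by exists g.
by exists g; rewrite ?mem_enum.
Qed.

Theorem mainTheorem5 (gT : finGroupType) (A : zmodType) (f : gT -> A) :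
  forall x y : gT, fbar f (x * y)%g = (fbar f x + fbar f y)%R.
Proof.
move=> x y.
have Hperm : perm_eq (map (shiftx x) (fshifts f)) (fshifts f).
  apply: uniq_perm; last 2 first.
  - exact: undup_uniq.
  - move=> k; apply/mapP/idP.
      case=> h; rewrite mem_fshifts => /existsP [g /eqP ->] ->.
      by rewrite shiftx_fshift mem_fshifts; apply/existsP; exists (g * x)%g.
    rewrite mem_fshifts => /existsP [g /eqP ->].
    exists (fshift f (g * x^-1)%g); first by rewrite mem_fshifts; apply/existsP; exists (g * x^-1)%g.
    by rewrite shiftx_fshift mulgKV.
  rewrite map_inj_in_uniq; first exact: undup_uniq.
  move=> h1 h2; rewrite !mem_fshifts => /existsP [g1 /eqP ->] /existsP [g2 /eqP ->] E.
  have key : forall g z, fshift f g z = (shiftx x (fshift f g) (x^-1 * z)%g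
                        - shiftx x (fshift f g) (x^-1)%g)%R.
    move=> g z; rewrite !ffunE !mulKVg mulgV mulg1.
    idtac.
    by rewrite subrr sub0r opprK subrK.
  by apply/ffunP=> z; rewrite key E -key.
rewrite /fbar.
have -> : (\sum_(h <- fshifts f) h (x * y)%g =
          \sum_(h <- fshifts f) (shiftx x h y + h x))%R.
  by apply: eq_bigr => h _; rewrite ffunE subrK.
rewrite big_split /= addrC; congr (_ + _)%R.
by rewrite -[in RHS](perm_big _ Hperm) big_map.
Qed.
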